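(* Let $n\ge 2$, let $T=\{1,\dots,n\}$ and let $\mathcal T$ be a topology on $T$. Fix an integer $k\ge 1$. Let $A,R,B,S\subseteq T\setminus\{n\}$ with $A\cap R=\emptyset$, $B\cap S=\emptyset$, where every point of $A$ and of $B$ is old (at stage $k$), and every point of $R$ and of $S$ is new (at stage $k$). Suppose $A\cup R\cup\{n\}$ and $B\cup S\cup\{n\}$ are two distinct new lower $k$-systems of $\mathcal T$. Then $A\cup\{n\}$ and $B\cup\{n\}$ are open in $\mathcal T$.
   Context: For $\alpha\in T$, $\alpha^{*}$ (the covering set of $\alpha$) denotes the smallest open set of $\mathcal T$ containing $\alpha$. For an integer $m\ge 0$, an $m$-system is an open set $P$ of $\mathcal T$ such that $P\setminus\{n\}$ has exactly $m$ points; it is upper if $n\notin P$ and lower if $n\in P$. For fixed $k$, a point $\alpha\neq n$ is called old if $\alpha^{*}$ is an $m$-system for some $m<k$, and new if $\alpha^{*}$ is a $k$-system. A $k$-system is called new if it contains at least one point $p\neq n$ that is not contained in any $m$-system with $m\le k-1$. *)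

(* Defs.v *)
From mathcomp Require Import all_boot.
Set Implicit Arguments. Unset Strict Implicit. Unset Printing Implicit Defensive.

Definition is_topology (T : finType) (tau : {set {set T}}) : Prop :=
  [/\ set0 \in tau, [set: T] \in tau,
      (forall F : {set {set T}}, F \subset tau -> \bigcup_(U in F) U \in tau)
    & (forall U V, U \in tau -> V \in tau -> U :&: V \in tau)].

(* covering set alpha^* : the smallest open set containing alpha
   (intersection of all open sets containing alpha). *)
Definition cover (T : finType) (tau : {set {set T}}) (a : T) : {set T} :=
  \bigcap_(U in tau | a \in U) U.

(* P is an m-system (top is the distinguished point n). *)
Definition msystem (T : finType) (tau : {set {set T}}) (top : T) (m : nat)
  (P : {set T}) : Prop :=
  P \in tau /\ #|P :\ top| = m.

Definition lower_msystem (T : finType) (tau : {set {set T}}) (top : T) (m : nat)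
  (P : {set T}) : Prop :=
  msystem tau top m P /\ top \in P.

Definition old_point (T : finType) (tau : {set {set T}}) (top : T) (k : nat)
  (a : T) : Prop :=
  a != top /\ exists m, m < k /\ msystem tau top m (cover tau a).

Definition new_point (T : finType) (tau : {set {set T}}) (top : T) (k : nat)
  (a : T) : Prop :=
  a != top /\ msystem tau top k (cover tau a).

Definition new_ksystem (T : finType) (tau : {set {set T}}) (top : T) (k : nat)
  (P : {set T}) : Prop :=
  msystem tau top k P /\
  exists p, [/\ p \in P, p != top &
    forall m (Q : {set T}), m <= k.-1 -> msystem tau top m Q -> p \notin Q].

(* Main.v *)
Require Import Defs.
From mathcomp Require Import all_boot.

Section Aux.
Variables (T : finType) (tau : {set {set T}}) (top : T).

Lemma cover_sub a U : U \in tau -> a \in U -> Defs.cover tau a \subset U.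
Proof. by move=> hU haU; rewrite /Defs.cover; apply: (bigcap_inf U); rewrite hU haU. Qed.

Lemma mem_cover a : a \in Defs.cover tau a.
Proof. by apply/bigcapP => U /andP[]. Qed.

Lemma card_sub_top (X Y : {set T}) : X \subset Y -> #|X :\ top| <= #|Y :\ top|.
Proof. by move=> h; apply: subset_leq_card; apply: setSD. Qed.

Lemma key (htau : is_topology tau) k (A R : {set T}) (Q : {set T})
  (hAold : forall a, a \in A -> old_point tau top k a)
  (hRnew : forall a, a \in R -> new_point tau top k a)
  (hPl : lower_msystem tau top k (top |: (A :|: R)))
  (hQ : Q \in tau) (hQt : top \in Q) (hQk : #|Q :\ top| = k)
  (hPQ : top |: (A :|: R) != Q) :
  top |: A \in tau.
Proof.
set P := top |: (A :|: R) in hPl hPQ *.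
case: hPl => [[hP hPk] hPt].
case: htau => _ _ hU hI.
have hPQo : P :&: Q \in tau by apply: hI.
have hR : forall r, r \in R -> r \notin P :&: Q.
  move=> r hr; apply/negP => hrPQ.
  case: (hRnew r hr) => _ [hc hck].
  have hs := cover_sub _ _ hPQo hrPQ.
  have h1 := card_sub_top _ _ hs.
  have e1 : (P :&: Q) :\ top = P :\ top.
    apply/eqP; rewrite eqEcard; rewrite setSD ?subsetIl //=.
    by rewrite hPk -hck.
  have e2 : (P :&: Q) :\ top = Q :\ top.
    apply/eqP; rewrite eqEcard; rewrite setSD ?subsetIr //=.
    by rewrite hQk -hck.
  move/negP: hPQ; apply.
  by rewrite -(setD1K hPt) -(setD1K hQt) -e1 -e2.
have hA : forall a, a \in A -> Defs.cover tau a \subset top |: A.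
  move=> a ha; case: (hAold a ha) => _ [m [hm [hc hcm]]].
  apply/subsetP => x hx.
  have : x \in P by apply: (subsetP (cover_sub _ _ hP _)) hx; rewrite !inE ha orbT.
  rewrite !inE; case/or3P => [->//|->|hxR]; first by rewrite orbT.
  case: (hRnew x hxR) => _ [_ hxk].
  have := card_sub_top _ _ (cover_sub _ _ hc hx).
  by rewrite hxk hcm leqNgt hm.
pose F := (P :&: Q) |: [set Defs.cover tau a | a in A].
have -> : top |: A = \bigcup_(U in F) U.
  apply/setP => x; apply/idP/bigcupP.
  - rewrite !inE; case/orP => [/eqP ->|hx].
      by exists (P :&: Q); rewrite !inE ?eqxx // hPt hQt.
    exists (Defs.cover tau x); last exact: mem_cover.
    by rewrite !inE; apply/orP; right; apply/imsetP; exists x.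
  - move=> [U]; rewrite !inE => /orP[/eqP ->|/imsetP[a ha ->]] hx.
      have hxP : x \in P by move: hx; rewrite inE => /andP[].
      move: hxP; rewrite /P !inE; case/or3P => [->//|->|hxR]; first by rewrite orbT.
      by move: (hR x hxR); rewrite hx.
    by move: (subsetP (hA a ha) x hx); rewrite !inE.
apply: hU; apply/subsetP => U; rewrite !inE => /orP[/eqP ->//|/imsetP[a ha ->]].
by case: (hAold a ha) => _ [m [_ [hc _]]].
Qed.
End Aux.

Theorem lemma2 (n : nat) (hn : 2 <= n) (top : 'I_n) (htop : val top = n.-1)
  (tau : {set {set 'I_n}}) (htau : is_topology tau) (k : nat) (hk : 1 <= k)
  (A R B S : {set 'I_n})
  (hA : top \notin A) (hR : top \notin R) (hB : top \notin B) (hS : top \notin S)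
  (hAR : [disjoint A & R]) (hBS : [disjoint B & S])
  (hAold : forall a, a \in A -> old_point tau top k a)
  (hBold : forall a, a \in B -> old_point tau top k a)
  (hRnew : forall a, a \in R -> new_point tau top k a)
  (hSnew : forall a, a \in S -> new_point tau top k a)
  (hP : new_ksystem tau top k (top |: (A :|: R)))
  (hPl : lower_msystem tau top k (top |: (A :|: R)))
  (hQ : new_ksystem tau top k (top |: (B :|: S)))
  (hQl : lower_msystem tau top k (top |: (B :|: S)))
  (hPQ : top |: (A :|: R) != top |: (B :|: S)) :
  top |: A \in tau /\ top |: B \in tau.
Proof.
have [[hP1 hP2] hP3] := hPl; have [[hQ1 hQ2] hQ3] := hQl.
split.
- exact: (@key _ tau top htau k A R _ hAold hRnew hPl hQ1 hQ3 hQ2 hPQ).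
- by apply: (@key _ tau top htau k B S _ hBold hSnew hQl hP1 hP3 hP2); rewrite eq_sym.
Qed.
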